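(* Let $(\mathcal C,\mathcal D,O,\vec z,v)$ be a configuration for $(F,f)$, let $C$ be a PB constraint, and suppose there is a substitution $\omega$ such that $$\text{(a)}\quad \mathcal C\cup\mathcal D\cup\{f\le v-1\}\cup\{\neg C\}\ \vdash\ \mathcal C|_\omega\cup O(\vec z|_\omega,\vec z)\cup\{f|_\omega\le f\},$$ $$\text{(b)}\quad \mathcal C\cup\mathcal D\cup\{f\le v-1\}\cup\{\neg C\}\cup O(\vec z,\vec z|_\omega)\ \vdash\ 0\ge1.$$ If $(\mathcal C,\mathcal D,O,\vec z,v)$ is weakly valid then $(\mathcal C,\mathcal D\cup\{C\},O,\vec z,v)$ is weakly valid; if it is valid then $(\mathcal C,\mathcal D\cup\{C\},O,\vec z,v)$ is valid.
   Context: Boolean variables take values in $\{0,1\}$; a literal is a variable $x$ or $\bar x=1-x$. A PB constraint is $C:\ \sum_i a_i\ell_i\ge A$ with integer $a_i,A$; its negation $\neg C$ is $\sum_i -a_i\ell_i\ge -A+1$. A total assignment $\alpha$ satisfies $C$ if $\sum_i a_i\alpha(\ell_i)\ge A$. A PB formula is a finite set of PB constraints. A substitution $\omega$ maps variables to literals or to $\{0,1\}$ (identity outside its domain, extended to literals by $\omega(\bar x)=\overline{\omega(x)}$); $C|_\omega$ replaces each $\ell_i$ by $\omega(\ell_i)$, $G|_\omega=\{D|_\omega: D\in G\}$, and for a total assignment $\alpha$, $\alpha\circ\omega$ is $x\mapsto\alpha(\omega(x))$. An objective is $f=\sum_i w_i\ell_i$ with integer $w_i$; $f|_\omega=\sum_i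 w_i\omega(\ell_i)$; $f\le k$ and $f|_\omega\le f$ are read as PB constraints, and for $k=\infty$ the constraints $f\le\infty$, $f\le\infty-1$ are trivially true (empty). $G\vdash D$ means $D$ is derivable from $G$ in the cutting planes system (axioms from $G$, literal axioms $\ell\ge0$, positive integer linear combinations, division of a constraint with nonnegative coefficients by a positive integer rounding coefficients and degree up), where additionally $G\vdash D$ whenever $0\ge1$ is so derivable from $G\cup\{\neg D\}$; $G\vdash H$ means $G\vdash D$ for all $D\in H$. This derivability is sound. A preorder encoding is a PB formula $O(\vec u,\vec v)$ over two lists of $n$ placeholder variables with a list $\vec z=(z_1,\dots,z_n)$ of variables, such that $\alpha\preceq\beta$ iff $O(\vec z|_\alpha,\vec z|_\beta)$ is true is reflexive and transitive; here $O(\vec z|_\alpha,\vec z|_\beta)$ is $O$ with $u_i$ replaced by $\alpha(z_i)$ and $v_i$ by $\beta(z_i)$, so $O(\vec z|_\omega,\vec z)$ replaces $u_i$ by $\omega(z_i)$ and $v_i$ by $z_i$, and $O(\vec z,\vec z|_\omega)$ replaces $u_i$ by $z_i$ and $v_i$ by $\omega(z_i)$. $\alpha\preceq_f\beta$ iff $\alpha\preceq\beta$ and $f(\alpha)\le f(\beta)$. Fix input $F$ and objective $f$. A configuration $(\mathcal C,\mathcal D,O,\vec z,v)$ has PB sets $\mathcal C,\mathcal D$, a preorder encoding, and $v\in\mathbb Z\cup\{\infty\}$. It is weakly valid if (1) for every integer $v'<v$, satisfiability of $F\cup\{f\le v'\}$ implies satisfiability of $\mathcal C\cup\{f\le v'\}$;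 (2) every total $\rho$ satisfying $\mathcal C\cup\{f\le v-1\}$ admits a total $\rho'\preceq_f\rho$ satisfying $\mathcal C\cup\mathcal D\cup\{f\le v-1\}$. It is valid if also (3) $v<\infty$ implies $F\cup\{f\le v\}$ satisfiable; (4) for every integer $v'<v$, satisfiability of $\mathcal C\cup\{f\le v'\}$ implies satisfiability of $F\cup\{f\le v'\}$. *)

(* Defs.v *)
From Stdlib Require Import ZArith List.
From mathcomp Require Import ssreflect ssrfun ssrbool eqtype ssrnat fintype.
Import ListNotations.
Set Implicit Arguments.
Local Open Scope Z_scope.

Inductive lit (X : Type) := Pos (x : X) | Neg (x : X).
Arguments Pos {X}. Arguments Neg {X}.

(** Image of a variable under a substitution: a literal or a constant. *)
Inductive target (Y : Type) := TLit (l : lit Y) | TConst (b : bool).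
Arguments TLit {Y}. Arguments TConst {Y}.

(** [Constr ts A] is  sum_{(a,l) in ts} a*l >= A. *)
Record constraint (X : Type) := Constr { terms : list (Z * lit X); deg : Z }.
Arguments Constr {X}. Arguments terms {X}. Arguments deg {X}.

Definition formula (X : Type) := list (constraint X).

Definition var := nat.

Definition lit_val {X} (a : X -> bool) (l : lit X) : Z :=
  match l with
  | Pos x => if a x then 1 else 0
  | Neg x => if a x then 0 else 1
  end.

Definition lin_val {X} (a : X -> bool) (ts : list (Z * lit X)) : Z :=
  fold_right (fun t s => fst t * lit_val a (snd t) + s) 0 ts.

Definition sat {X} (a : X -> bool) (C : constraint X) : Prop :=
  deg C <= lin_val a (terms C).

Definition sat_formula {X} (a : X -> bool) (G : formula X) : Prop :=
  forall C, In C G -> sat a C.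

Definition satisfiable {X} (G : formula X) : Prop :=
  exists a : X -> bool, sat_formula a G.

Definition neg_constr {X} (C : constraint X) : constraint X :=
  Constr (map (fun t => (- fst t, snd t)) (terms C)) (- deg C + 1).

Definition neg_target {Y} (t : target Y) : target Y :=
  match t with
  | TLit (Pos y) => TLit (Neg y)
  | TLit (Neg y) => TLit (Pos y)
  | TConst b => TConst (negb b)
  end.

Definition inst_lit {X Y} (s : X -> target Y) (l : lit X) : target Y :=
  match l with Pos x => s x | Neg x => neg_target (s x) end.

Definition inst_constr {X Y} (s : X -> target Y) (C : constraint X) : constraint Y :=
  fold_right
    (fun t acc =>
       match inst_lit s (snd t) with
       | TLit m => Constr ((fst t, m) :: terms acc) (deg acc)
       | TConst b => Constr (terms acc) (deg acc - fst t * (if b then 1 else 0))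
       end)
    (Constr [] (deg C)) (terms C).

Definition inst_formula {X Y} (s : X -> target Y) (G : formula X) : formula Y :=
  map (inst_constr s) G.

(** A substitution: finite domain given as a list of (variable, image) pairs
    (first match wins); identity outside its domain. *)
Definition subst := list (var * target var).

Fixpoint subst_var (w : subst) (x : var) : target var :=
  match w with
  | [] => TLit (Pos x)
  | (y, t) :: w' => if Nat.eqb x y then t else subst_var w' x
  end.

Definition subst_constr (w : subst) (C : constraint var) := inst_constr (subst_var w) C.
Definition subst_formula (w : subst) (G : formula var) := inst_formula (subst_var w) G.

Definition target_val {Y} (a : Y -> bool) (t : target Y) : bool :=
  match t with
  | TLit (Pos y) => a y
  | TLit (Neg y) => negb (a y)
  | TConst b => b
  end.
Definition compose_subst (a : var -> bool) (w : subst) : var -> bool :=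
  fun x => target_val a (subst_var w x).

Definition objective := list (Z * lit var).
Definition obj_val (a : var -> bool) (f : objective) : Z := lin_val a f.

Definition obj_le (f : objective) (k : Z) : constraint var :=
  Constr (map (fun t => (- fst t, snd t)) f) (- k).

(** f|_w <= f read as a PB constraint: with f|_w normalised as
    (terms T >= deg D), i.e. f|_w = sum T - deg D, this is  f - sum T >= - deg D. *)
Definition obj_subst_le (f : objective) (w : subst) : constraint var :=
  let D := subst_constr w (Constr f 0) in
  Constr (f ++ map (fun t => (- fst t, snd t)) (terms D)) (- deg D).

Inductive zinf := Fin (k : Z) | Inf.

Definition obj_bound (f : objective) (v : zinf) : formula var :=
  match v with Fin k => [obj_le f k] | Inf => [] end.
Definition obj_bound_m1 (f : objective) (v : zinf) : formula var :=
  match v with Fin k => [obj_le f (k - 1)] | Inf => [] end.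

Definition below (v' : Z) (v : zinf) : Prop :=
  match v with Fin k => v' < k | Inf => True end.

(** Placeholder variables: inl i = u_i, inr i = v_i. *)
Definition place (n : nat) := ('I_n + 'I_n)%type.

Definition preceq {n} (O : formula (place n)) (z : 'I_n -> var)
  (a b : var -> bool) : Prop :=
  sat_formula (fun p : place n => match p with inl i => a (z i) | inr i => b (z i) end) O.

Definition is_preorder_encoding {n} (O : formula (place n)) (z : 'I_n -> var) : Prop :=
  (forall a, preceq O z a a) /\
  (forall a b c, preceq O z a b -> preceq O z b c -> preceq O z a c).

Definition preceq_f {n} (O : formula (place n)) (z : 'I_n -> var) (f : objective)
  (a b : var -> bool) : Prop :=
  preceq O z a b /\ obj_val a f <= obj_val b f.

Definition O_left {n} (w : subst) (O : formula (place n)) (z : 'I_n -> var) : formula var :=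
  inst_formula (fun p : place n => match p with
                  | inl i => subst_var w (z i) | inr i => TLit (Pos (z i)) end) O.
Definition O_right {n} (w : subst) (O : formula (place n)) (z : 'I_n -> var) : formula var :=
  inst_formula (fun p : place n => match p with
                  | inl i => TLit (Pos (z i)) | inr i => subst_var w (z i) end) O.

Definition add_constr (C1 C2 : constraint var) : constraint var :=
  Constr (terms C1 ++ terms C2) (deg C1 + deg C2).
Definition scale_constr (c : Z) (C : constraint var) : constraint var :=
  Constr (map (fun t => (c * fst t, snd t)) (terms C)) (c * deg C).
Definition ceil_div (a k : Z) : Z := - ((- a) / k).
Definition divide_constr (k : Z) (C : constraint var) : constraint var :=
  Constr (map (fun t => (ceil_div (fst t) k, snd t)) (terms C)) (ceil_div (deg C) k).

(** Constraints are identified up to normal form: the coefficient of each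
    variable x (writing xbar = 1 - x) and the resulting degree. *)
Definition coef (C : constraint var) (x : var) : Z :=
  fold_right (fun t s => match snd t with
                         | Pos y => if Nat.eqb x y then fst t + s else s
                         | Neg y => if Nat.eqb x y then - fst t + s else s
                         end) 0 (terms C).
Definition neg_const (C : constraint var) : Z :=
  fold_right (fun t s => match snd t with Pos _ => s | Neg _ => fst t + s end) 0 (terms C).
Definition equiv_constr (C D : constraint var) : Prop :=
  (forall x, coef C x = coef D x) /\ deg C - neg_const C = deg D - neg_const D.

Definition falsum : constraint var := Constr [] 1.

Inductive derives : formula var -> constraint var -> Prop :=
| d_axiom G C : In C G -> derives G C
| d_lit G l : derives G (Constr [(1, l)] 0)
| d_add G C1 C2 : derives G C1 -> derives G C2 -> derives G (add_constr C1 C2)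
| d_scale G c C : 0 < c -> derives G C -> derives G (scale_constr c C)
| d_div G k C : 0 < k -> (forall t, In t (terms C) -> 0 <= fst t) ->
    derives G C -> derives G (divide_constr k C)
| d_equiv G C D : equiv_constr C D -> derives G C -> derives G D
| d_contra G D : derives (neg_constr D :: G) falsum -> derives G D.

Definition derives_all (G H : formula var) : Prop := forall D, In D H -> derives G D.

Definition weakly_valid {n} (F : formula var) (f : objective) (Cc Dd : formula var)
  (O : formula (place n)) (z : 'I_n -> var) (v : zinf) : Prop :=
  (forall v' : Z, below v' v ->
     satisfiable (F ++ [obj_le f v']) -> satisfiable (Cc ++ [obj_le f v'])) /\
  (forall rho : var -> bool, sat_formula rho (Cc ++ obj_bound_m1 f v) ->
     exists rho' : var -> bool, preceq_f O z f rho' rho /\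
       sat_formula rho' (Cc ++ Dd ++ obj_bound_m1 f v)).

Definition valid {n} (F : formula var) (f : objective) (Cc Dd : formula var)
  (O : formula (place n)) (z : 'I_n -> var) (v : zinf) : Prop :=
  weakly_valid F f Cc Dd O z v /\
  (v <> Inf -> satisfiable (F ++ obj_bound f v)) /\
  (forall v' : Z, below v' v ->
     satisfiable (Cc ++ [obj_le f v']) -> satisfiable (F ++ [obj_le f v'])).

(* Main.v *)
Require Import Defs.
From Stdlib Require Import ZArith List Lia.
From mathcomp Require Import ssreflect ssrfun ssrbool eqtype ssrnat fintype finfun.
From mathcomp Require seq.
From Stdlib Require Import ClassicalEpsilon.
Import ListNotations.
Local Open Scope Z_scope.

Lemma lit_val_01 {X} (a : X -> bool) l : 0 <= lit_val a l <= 1.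
Proof. destruct l; simpl; destruct (a x); lia. Qed.

Lemma lin_val_app {X} (a : X -> bool) s t : lin_val a (s ++ t) = lin_val a s + lin_val a t.
Proof. induction s as [|[c l] s IH]; simpl; [lia|]. rewrite IH; lia. Qed.

Lemma lin_val_neg {X} (a : X -> bool) s :
  lin_val a (map (fun t => (- fst t, snd t)) s) = - lin_val a s.
Proof. induction s as [|[c l] s IH]; simpl; [lia|]. rewrite IH; lia. Qed.

Lemma lin_val_scale (a : var -> bool) c s :
  lin_val a (map (fun t => (c * fst t, snd t)) s) = c * lin_val a s.
Proof. induction s as [|[d l] s IH]; simpl; [lia|]. rewrite IH; lia. Qed.

Lemma lin_val_ext {X} (a b : X -> bool) s : (forall x, a x = b x) -> lin_val a s = lin_val b s.
Proof. move=> H; induction s as [|[c l] s IH]; simpl; [lia|]. rewrite IH.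
  destruct l; simpl; rewrite H; lia. Qed.

Lemma sat_neg {X} (a : X -> bool) C : sat a (neg_constr C) <-> ~ sat a C.
Proof. unfold sat, neg_constr; simpl. rewrite lin_val_neg. lia. Qed.

Lemma sat_formula_app {X} (a : X -> bool) G H :
  sat_formula a (G ++ H) <-> sat_formula a G /\ sat_formula a H.
Proof. unfold sat_formula; split.
  - move=> K; split => C HC; apply K; apply in_or_app; tauto.
  - move=> [K1 K2] C HC; destruct (in_app_or _ _ _ HC); auto. Qed.

Lemma sat_formula_cons {X} (a : X -> bool) C G :
  sat_formula a (C :: G) <-> sat a C /\ sat_formula a G.
Proof. unfold sat_formula; split.
  - move=> K; split; [apply K; left; auto| move=> D HD; apply K; right; auto].
  - move=> [K1 K2] D [<-|?]; auto. Qed.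

Lemma ceil_div_mul a k : 0 < k -> a <= ceil_div a k * k.
Proof. move=> Hk; unfold ceil_div.
  have := Z.mul_div_le (-a) k Hk. lia. Qed.

Lemma ceil_div_le a k S : 0 < k -> a <= S * k -> ceil_div a k <= S.
Proof. move=> Hk H; unfold ceil_div.
  suff : - S <= (- a) / k by lia.
  apply Z.div_le_lower_bound; lia. Qed.

Lemma lin_val_div (a : var -> bool) k s : 0 < k ->
  lin_val a s <= k * lin_val a (map (fun t => (ceil_div (fst t) k, snd t)) s).
Proof. move=> Hk; induction s as [|[c l] s IH]; simpl; [lia|].
  have := ceil_div_mul c k Hk. have := lit_val_01 a l. nia. Qed.

Definition svar (t : Z * lit var) : var := match snd t with Pos x => x | Neg x => x end.

Fixpoint vsum (a : var -> bool) (cf : var -> Z) (V : list var) : Z :=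
  match V with [] => 0 | x :: V' => cf x * (if a x then 1 else 0) + vsum a cf V' end.

Lemma vsum_ext a cf cg V : (forall x, cf x = cg x) -> vsum a cf V = vsum a cg V.
Proof. move=> H; induction V; simpl; auto. rewrite IHV H; auto. Qed.

Lemma vsum_add a cf cg V : vsum a (fun x => cf x + cg x) V = vsum a cf V + vsum a cg V.
Proof. induction V; simpl; [lia|]. rewrite IHV; lia. Qed.

Lemma vsum_single a y c V : NoDup V -> In y V ->
  vsum a (fun x => if Nat.eqb x y then c else 0) V = c * (if a y then 1 else 0).
Proof. induction 1 as [|x V Hn Hd IH]; simpl; [tauto|].
  move=> [Hy|Hy].
  - subst. rewrite Nat.eqb_refl.
    have -> : vsum a (fun x0 => if Nat.eqb x0 y then c else 0) V = 0.
    { clear IH Hd. induction V; simpl; auto. case E: (Nat.eqb a0 y).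
      - apply Nat.eqb_eq in E; subst; exfalso; apply Hn; left; auto.
      - rewrite IHV; [lia| move=> ?; apply Hn; right; auto]. }
    lia.
  - case E: (Nat.eqb x y).
    + apply Nat.eqb_eq in E; subst; contradiction.
    + rewrite IH; auto; lia. Qed.

Lemma coef_cons t s x : coef (Constr (t :: s) 0) x =
  (match snd t with Pos y => if Nat.eqb x y then fst t else 0
    | Neg y => if Nat.eqb x y then - fst t else 0 end) + coef (Constr s 0) x.
Proof. destruct t as [c [y|y]]; unfold coef; simpl; destruct (Nat.eqb x y); lia. Qed.

Lemma vsum_zero a V : vsum a (fun _ => 0) V = 0.
Proof. induction V as [|x V IH]; simpl; try rewrite IH; try lia. Qed.

Lemma lin_vsum a s V : NoDup V -> (forall t, In t s -> In (svar t) V) ->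
  lin_val a s - neg_const (Constr s 0) = vsum a (coef (Constr s 0)) V.
Proof. move=> Hd; induction s as [|t s IH].
  - move=> _. rewrite (vsum_ext _ _ (fun _ => 0) _ (fun _ => erefl)) vsum_zero. reflexivity.
  - move=> Hin. rewrite (vsum_ext _ _ _ _ (coef_cons t s)) vsum_add.
    rewrite -IH; [|move=> u Hu; apply Hin; right; auto].
    have Ht := Hin t (or_introl erefl). unfold svar in Ht.
    change (lin_val a (t :: s)) with (fst t * lit_val a (snd t) + lin_val a s).
    change (neg_const (Constr (t :: s) 0)) with
      (match snd t with Pos _ => neg_const (Constr s 0) | Neg _ => fst t + neg_const (Constr s 0) end).
    destruct t as [c [y|y]]; simpl in *.
    + rewrite (vsum_single a y c V Hd Ht). destruct (a y); lia.
    + rewrite (vsum_single a y (-c) V Hd Ht). destruct (a y); lia. Qed.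

Lemma coef_terms C x : coef C x = coef (Constr (terms C) 0) x.
Proof. reflexivity. Qed.
Lemma neg_terms C : neg_const C = neg_const (Constr (terms C) 0).
Proof. reflexivity. Qed.

Lemma sat_equiv a C D : equiv_constr C D -> sat a C -> sat a D.
Proof. move=> [Hc Hn]. unfold sat.
  set V := nodup Nat.eq_dec (map svar (terms C) ++ map svar (terms D)).
  have HV : NoDup V by apply NoDup_nodup.
  have E1 := lin_vsum a (terms C) V HV.
  have E2 := lin_vsum a (terms D) V HV.
  rewrite -!neg_terms in E1 E2.
  rewrite (vsum_ext _ _ (coef D) _ (fun x => esym (coef_terms D x))) in E2.
  rewrite (vsum_ext _ _ (coef C) _ (fun x => esym (coef_terms C x))) in E1.
  rewrite (vsum_ext _ _ _ _ Hc) in E1.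
  have H1 : forall t, In t (terms C) -> In (svar t) V.
  { move=> t Ht; apply nodup_In, in_or_app; left; apply in_map; auto. }
  have H2 : forall t, In t (terms D) -> In (svar t) V.
  { move=> t Ht; apply nodup_In, in_or_app; right; apply in_map; auto. }
  specialize (E1 H1); specialize (E2 H2). lia. Qed.

Lemma soundness G D : derives G D -> forall a, sat_formula a G -> sat a D.
Proof. induction 1; move=> a Ha.
  - apply Ha; auto.
  - unfold sat. change (0 <= 1 * lit_val a l + 0). have := lit_val_01 a l. lia.
  - have := IHderives1 a Ha; have := IHderives2 a Ha. unfold sat, add_constr; simpl.
    rewrite lin_val_app; lia.
  - have := IHderives a Ha. unfold sat, scale_constr; simpl. rewrite lin_val_scale. nia.
  - have := IHderives a Ha. unfold sat, divide_constr; simpl. move=> HC.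
    apply ceil_div_le; auto. have := lin_val_div a k (terms C) H. nia.
  - apply (sat_equiv a C D); auto.
  - destruct (Z_le_gt_dec (deg D) (lin_val a (terms D))) as [h|h]; auto.
    exfalso. have : sat a falsum.
    { apply IHderives. apply sat_formula_cons; split; auto.
      apply sat_neg. unfold sat; lia. }
    unfold sat, falsum; simpl; lia. Qed.
Definition tv {Y} (b : Y -> bool) (t : target Y) : Z :=
  match t with TLit m => lit_val b m | TConst bb => if bb then 1 else 0 end.

Lemma inst_lit_val {X Y} (s : X -> target Y) (b : Y -> bool) (g : X -> bool) l :
  (forall x, g x = target_val b (s x)) -> lit_val g l = tv b (inst_lit s l).
Proof. move=> H; destruct l as [x|x]; simpl; rewrite H;
  destruct (s x) as [[y|y]|bb]; simpl; destruct (b y) || destruct bb; reflexivity. Qed.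

Lemma inst_val {X Y} (s : X -> target Y) (b : Y -> bool) (g : X -> bool) C :
  (forall x, g x = target_val b (s x)) ->
  lin_val b (terms (inst_constr s C)) - deg (inst_constr s C) = lin_val g (terms C) - deg C.
Proof. move=> H; destruct C as [ts d]; unfold inst_constr; simpl.
  induction ts as [|[c l] ts IH]; simpl; [lia|].
  have E := inst_lit_val s b g l H. simpl in E.
  destruct (inst_lit s l) as [m|bb]; simpl in *; rewrite E; lia. Qed.

Lemma sat_inst {X Y} (s : X -> target Y) (b : Y -> bool) (g : X -> bool) C :
  (forall x, g x = target_val b (s x)) -> sat b (inst_constr s C) <-> sat g C.
Proof. move=> H; have := inst_val s b g C H. unfold sat; lia. Qed.

Lemma sat_inst_formula {X Y} (s : X -> target Y) (b : Y -> bool) (g : X -> bool) G :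
  (forall x, g x = target_val b (s x)) -> sat_formula b (inst_formula s G) <-> sat_formula g G.
Proof. move=> H; unfold sat_formula, inst_formula; split.
  - move=> K C HC. apply (sat_inst s b g C H). apply K, in_map; auto.
  - move=> K D /in_map_iff [C [<- HC]]. apply (sat_inst s b g C H); auto. Qed.

Lemma O_left_sem {n} (O : formula (place n)) z w a :
  sat_formula a (O_left w O z) -> preceq O z (compose_subst a w) a.
Proof. unfold O_left, preceq. apply sat_inst_formula. move=> [i|i]; reflexivity. Qed.

Lemma O_right_sem {n} (O : formula (place n)) z w a :
  preceq O z a (compose_subst a w) -> sat_formula a (O_right w O z).
Proof. unfold O_right, preceq. apply sat_inst_formula. move=> [i|i]; reflexivity. Qed.

Lemma obj_subst_sem f w a : sat a (obj_subst_le f w) ->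
  obj_val (compose_subst a w) f <= obj_val a f.
Proof. unfold sat, obj_subst_le, obj_val; simpl. rewrite lin_val_app lin_val_neg.
  have := inst_val (subst_var w) a (compose_subst a w) (Constr f 0) (fun _ => erefl).
  unfold subst_constr. simpl. lia. Qed.

Lemma sat_obj_le a f k : sat a (obj_le f k) <-> obj_val a f <= k.
Proof. unfold sat, obj_le, obj_val; simpl. rewrite lin_val_neg. lia. Qed.

Lemma bound_mono f v a b : sat_formula a (obj_bound_m1 f v) ->
  obj_val b f <= obj_val a f -> sat_formula b (obj_bound_m1 f v).
Proof. destruct v as [k|]; simpl; [|move=> _ _ C []].
  move=> /sat_formula_cons [H _] Hle. apply sat_formula_cons; split; [|move=> C []].
  apply sat_obj_le in H; apply sat_obj_le; lia. Qed.

Lemma sat_subst_formula a w G : sat_formula a (subst_formula w G) -> sat_formula (compose_subst a w) G.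
Proof. apply sat_inst_formula. reflexivity. Qed.
From mathcomp Require Import zify.
Module Meas.
Import seq.

Lemma count_lt (T : eqType) (P Q : pred T) (s : list T) (x : T) :
  (forall y, P y -> Q y) -> x \in s -> Q x -> ~~ P x ->
  (seq.count P s < seq.count Q s)%N.
Proof. move=> HPQ; elim: s => [|y s IH] //=. rewrite seq.inE => /orP [/eqP ->|xs] Qx nPx.
  - rewrite (negbTE nPx) Qx. have := seq.sub_count HPQ s. lia.
  - have := IH xs Qx nPx. case Py: (P y); [rewrite (HPQ y Py)|]; case: (Q y); lia. Qed.

Section Measure.
Variables (n : nat) (O : formula (place n)) (z : 'I_n -> var).

Definition proj (c : var -> bool) : {ffun 'I_n -> bool} := [ffun i => c (z i)].

Lemma preceq_projl c c' b : proj c = proj c' -> preceq O z c b -> preceq O z c' b.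
Proof. move=> E H D HD. have := H D HD. unfold sat.
  rewrite (lin_val_ext _ (fun p => match p with inl i => c' (z i) | inr i => b (z i) end)) //.
  move=> [i|i] //. have := congr1 (fun g : {ffun 'I_n -> bool} => g i) E. rewrite !ffunE. auto. Qed.

Definition Pb (a : var -> bool) (g : {ffun 'I_n -> bool}) : bool :=
  if excluded_middle_informative (exists c, proj c = g /\ preceq O z c a) then true else false.

Definition meas (a : var -> bool) : nat := seq.count (Pb a) (enum {ffun 'I_n -> bool}).

Lemma meas_lt a b : is_preorder_encoding O z -> preceq O z b a -> ~ preceq O z a b ->
  (meas b < meas a)%N.
Proof. move=> [Hr Ht] Hba Hab. unfold meas. apply (count_lt _ _ _ _ (proj a)).
  - move=> g. unfold Pb. case: excluded_middle_informative => // [[c [E Hc]]] _.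
    case: excluded_middle_informative => // H; exfalso; apply H. exists c; split; eauto.
  - by rewrite mem_enum.
  - unfold Pb. case: excluded_middle_informative => // H; exfalso; apply H. exists a; split; auto.
  - unfold Pb. case: excluded_middle_informative => // [[c [E Hc]]].
    exfalso; apply Hab. apply (preceq_projl c); auto. Qed.
End Measure.
End Meas.
Import Meas.

Theorem mainTheorem7 (F : formula var) (f : objective) (Cc Dd : formula var)
  (n : nat) (O : formula (place n)) (z : 'I_n -> var) (v : zinf)
  (C : constraint var) (w : subst) :
  is_preorder_encoding O z ->
  derives_all (Cc ++ Dd ++ obj_bound_m1 f v ++ neg_constr C :: nil)
              (subst_formula w Cc ++ O_left w O z ++ obj_subst_le f w :: nil) ->
  derives (Cc ++ Dd ++ obj_bound_m1 f v ++ neg_constr C :: nil ++ O_right w O z) falsum ->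
  (weakly_valid F f Cc Dd O z v -> weakly_valid F f Cc (Dd ++ C :: nil) O z v) /\
  (valid F f Cc Dd O z v -> valid F f Cc (Dd ++ C :: nil) O z v).
Proof.
  move=> Hpre Ha Hb.
  have HP := Hpre. destruct HP as [Hr Ht].
  set B := obj_bound_m1 f v.
  have KEY : weakly_valid F f Cc Dd O z v -> weakly_valid F f Cc (Dd ++ C :: nil) O z v.
  { move=> [W1 W2]; split; [exact W1|]. fold B in W2 |- *.
    have claim : forall k a, (meas n O z a < k)%N -> sat_formula a (Cc ++ Dd ++ B) ->
      exists r, preceq_f O z f r a /\ sat_formula r (Cc ++ (Dd ++ C :: nil) ++ B).
    { elim=> [|k IH] a //. move=> Hm Hs.
      move: Hs => /sat_formula_app [HsC /sat_formula_app [HsD HsB]].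
      destruct (Z_le_gt_dec (deg C) (lin_val a (terms C))) as [hC|hC].
      - exists a; split; [split; [apply Hr|lia]|].
        apply sat_formula_app; split; auto. apply sat_formula_app; split; auto.
        apply sat_formula_app; split; auto. apply sat_formula_cons; split; auto.
        move=> ? [].
      - have Hctx : sat_formula a (Cc ++ Dd ++ B ++ neg_constr C :: nil).
        { apply sat_formula_app; split; auto. apply sat_formula_app; split; auto.
          apply sat_formula_app; split; auto. apply sat_formula_cons; split; [|move=> ? []].
          apply sat_neg; unfold sat; lia. }
        have HA : sat_formula a (subst_formula w Cc ++ O_left w O z ++ obj_subst_le f w :: nil).
        { move=> D HD. apply (soundness _ _ (Ha D HD)); auto. }
        move: HA => /sat_formula_app [HA1 /sat_formula_app [HA2 /sat_formula_cons [HA3 _]]].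
        set a' := compose_subst a w.
        have Hc' := sat_subst_formula a w Cc HA1.
        have Hp' := O_left_sem O z w a HA2.
        have Hf' := obj_subst_sem f w a HA3.
        have HB' : sat_formula a' B := bound_mono f v a a' HsB Hf'.
        have [b [[Hpb Hfb] Hsb]] : exists b, preceq_f O z f b a' /\ sat_formula b (Cc ++ Dd ++ B).
        { apply W2. apply sat_formula_app; split; auto. }
        have Hna : ~ preceq O z a a'.
        { move=> H. have := soundness _ _ Hb a. unfold sat, falsum; simpl.
          move=> K; suff : (1 <= 0)%Z by lia. apply K.
                    have E : Cc ++ Dd ++ B ++ neg_constr C :: O_right w O z =
                   (Cc ++ Dd ++ B ++ neg_constr C :: nil) ++ O_right w O z.
          { rewrite -!app_assoc. reflexivity. }
          simpl; rewrite E. apply sat_formula_app; split; auto. apply O_right_sem; auto. }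
        have Hba : preceq O z b a := Ht _ _ _ Hpb Hp'.
        have Hab : ~ preceq O z a b := fun H => Hna (Ht _ _ _ H Hpb).
        have Hlt := meas_lt n O z a b Hpre Hba Hab.
        have [r [[Hpr Hfr] Hsr]] := IH b (leq_trans Hlt Hm) Hsb.
        exists r; split; auto. split; [exact (Ht _ _ _ Hpr Hba)| unfold a' in *; lia]. }
    move=> rho Hrho. have [r1 [[Hp1 Hf1] Hs1]] := W2 rho Hrho.
    have [r [[Hp Hf] Hs]] := claim (meas n O z r1).+1 r1 (ltnSn _) Hs1.
    exists r; split; auto. split; [exact (Ht _ _ _ Hp Hp1)| lia]. }
  split; [exact KEY|].
  move=> [WV [V2 V3]]; split; [apply KEY; exact WV| split; assumption].
Qed.
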